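(* In $\boldsymbol{k}\{\{x,y\}\}$, up to terms of total degree $\ge5$, \begin{align*} \log_l(\exp_l(x)\exp_l(y)) ={}& x+y+\tfrac12[x,y]\\ &+\tfrac1{12}[x,[x,y]]-\tfrac13\langle x;x,y\rangle-\tfrac1{12}[y,[x,y]]-\tfrac16\langle y;x,y\rangle-\tfrac12\Phi(x;y,y)\\ &-\tfrac1{24}\langle x;x,[x,y]\rangle-\tfrac1{12}[x,\langle x;x,y\rangle]-\tfrac18\langle x,x;x,y\rangle\\ &+\tfrac1{24}[[x,[x,y]],y]-\tfrac1{24}[x,\langle y;x,y\rangle]-\tfrac14\Phi(x,x;y,y)-\tfrac14[x,\Phi(x;y,y)]\\ &-\tfrac1{24}[\langle x;x,y\rangle,y]-\tfrac1{24}\langle x;[x,y],y\rangle-\tfrac16\langle x,y;x,y\rangle+\tfrac1{24}\langle y,x;x,y\rangle\\ &+\tfrac1{12}[\Phi(x;y,y),y]+\tfrac1{24}\langle y;y,[x,y]\rangle-\tfrac1{24}\langle y,y;x,y\rangle-\tfrac16\Phi(x;y,y,y). \end{align*}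
   Context: $\boldsymbol{k}$ is a field of characteristic zero; $\boldsymbol{k}\{\{x,y\}\}$ is the unital algebra of formal power series in two non-associative variables. Powers are left-normed, $u^n:=((uu)\cdots)u$; $\exp_l(u):=\sum_{n\ge0}u^n/n!$, and $\log_l$ is its inverse (from series with constant term $1$ to series with zero constant term). $[a,b]:=ab-ba$. $\Delta,\epsilon$ are the continuous unital algebra homomorphisms with $x,y$ primitive; Sweedler notation $\Delta(u)=\sum u_{(1)}\otimes u_{(2)}$; left division $\backslash$ is the unique bilinear operation with $\sum u_{(1)}\backslash(u_{(2)}v)=\epsilon(u)v=\sum u_{(1)}(u_{(2)}\backslash v)$. Associator $(a,b,c):=(ab)c-a(bc)$. For $\underline{x}:=((x_1x_2)\cdots)x_m$, $\underline{y}:=((y_1y_2)\cdots)y_n$, $p(x_1,\dots,x_m;y_1,\dots,y_n;z):=\sum(\underline{x}_{(1)}\underline{y}_{(1)})\backslash(\underline{x}_{(2)},\underline{y}_{(2)},z)$ (a multilinear non-associative polynomial). For $m\ge1$: $\langle x_1,\dots,x_m;b,c\rangle:=-p(x_1,\dots,x_m;b;c)+p(x_1,\dots,x_m;c;b)$. For $m,n\ge1$: $\Phi(x_1,\dots,x_m;y_1,\dots,y_n;y_{n+1}):=\frac{1}{m!(n+1)!}\sum_{\sigma\in S_m,\,\tau\in S_{n+1}}p(x_{\sigma(1)},\dots,x_{\sigma(m)};y_{\tau(1)},\dots,y_{\tau(n)};y_{\tau(n+1)})$; in the formula, $\Phi(x;y,y)$ means $\Phi(x;y;y)$, $\Phi(x,x;y,y)$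 means $\Phi(x,x;y;y)$ and $\Phi(x;y,y,y)$ means $\Phi(x;y,y;y)$. *)

(* Defs.v *)
From HB Require Import structures.
From mathcomp Require Import all_boot all_order all_algebra all_fingroup.
Set Implicit Arguments. Unset Strict Implicit. Unset Printing Implicit Defensive.
Import Order.TTheory GRing.Theory.
Local Open Scope ring_scope.

(* A word is a nonempty non-associative monomial (binary tree whose    *)
(* leaves are x or y); a monomial is either the unit 1 (None) or a     *)
(* word.                                                               *)
Inductive word := Lx | Ly | Nd of word & word.

Fixpoint word_eqb (u v : word) : bool :=
  match u, v with
  | Lx, Lx => true
  | Ly, Ly => true
  | Nd a b, Nd c d => word_eqb a c && word_eqb b d
  | _, _ => false
  end.

Lemma word_eqP : Equality.axiom word_eqb.
Proof.
elim=> [| |a IHa b IHb] [| |c d] /=; try by constructor.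
case: (IHa c) => [->|H]; last by constructor; case.
case: (IHb d) => [->|H]; last by constructor; case.
by constructor.
Qed.

HB.instance Definition _ := hasDecEq.Build word word_eqP.

Definition mono := option word.

Fixpoint wdeg (w : word) : nat :=
  match w with Lx | Ly => 1%N | Nd a b => (wdeg a + wdeg b)%N end.

Definition deg (m : mono) : nat := if m is Some w then wdeg w else 0%N.

Fixpoint wordsF (fuel d : nat) : seq word :=
  match fuel with
  | 0 => [::]
  | f.+1 =>
    if d == 1%N then [:: Lx; Ly]
    else flatten [seq flatten [seq [seq Nd a b | b <- wordsF f (d - i)]
                              | a <- wordsF f i]
                 | i <- iota 1 d.-1]
  end.
Definition words (d : nat) : seq word := wordsF d d.

Definition monos_le (d : nat) : seq mono :=
  None :: [seq Some w | w <- flatten [seq words i | i <- iota 1 d]].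

Definition facts (m : mono) : seq (mono * mono) :=
  match m with
  | None => [:: (None, None)]
  | Some w => [:: (None, Some w); (Some w, None)] ++
              (if w is Nd a b then [:: (Some a, Some b)] else [::])
  end.

Section Series.
Variable K : fieldType.

(* k{{x,y}} : formal power series = coefficient functions on monomials *)
Definition series := mono -> K.
(* completed tensor product k{{x,y}} (x) k{{x,y}} *)
Definition tensor := mono -> mono -> K.

Definition zeroS : series := fun _ => 0.
Definition oneS : series := fun m => if m is None then 1 else 0.
Definition xS : series := fun m => match m with Some Lx => 1 | _ => 0 end.
Definition yS : series := fun m => match m with Some Ly => 1 | _ => 0 end.
Definition monoS (m0 : mono) : series := fun m => if m == m0 then 1 else 0.

Definition addS (f g : series) : series := fun m => f m + g m.
Definition oppS (f : series) : series := fun m => - f m.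
Definition scaleS (c : K) (f : series) : series := fun m => c * f m.
Definition mulS (f g : series) : series :=
  fun m => \sum_(p <- facts m) f p.1 * g p.2.

Definition commS (a b : series) : series := addS (mulS a b) (oppS (mulS b a)).
Definition assocS (a b c : series) : series :=
  addS (mulS (mulS a b) c) (oppS (mulS a (mulS b c))).

Fixpoint powS (u : series) (n : nat) : series :=
  if n is n'.+1 then mulS (powS u n') u else oneS.

(* exp_l(u) = sum_n u^n / n!  (for u with zero constant term, only n <= deg m
   contribute to the coefficient of a monomial m) *)
Definition exp_l (u : series) : series :=
  fun m => \sum_(i < (deg m).+1) powS u i m / (i`!)%:R.

Definition is_log_l (w z : series) : Prop :=
  z None = 0 /\ forall m, exp_l z m = w m.

Definition tens (f g : series) : tensor := fun m1 m2 => f m1 * g m2.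
Definition addT (F G : tensor) : tensor := fun m1 m2 => F m1 m2 + G m1 m2.
Definition mulT (F G : tensor) : tensor :=
  fun m1 m2 => \sum_(p <- facts m1) \sum_(q <- facts m2) F p.1 q.1 * G p.2 q.2.

(* coproduct on monomials: unital algebra hom with x, y primitive *)
Fixpoint deltaw (w : word) : tensor :=
  match w with
  | Lx => addT (tens xS oneS) (tens oneS xS)
  | Ly => addT (tens yS oneS) (tens oneS yS)
  | Nd a b => mulT (deltaw a) (deltaw b)
  end.
Definition delta_mono (m : mono) : tensor :=
  if m is Some w then deltaw w else tens oneS oneS.

Definition Delta (u : series) : tensor :=
  fun m1 m2 => \sum_(w <- monos_le (deg m1 + deg m2)) u w * delta_mono w m1 m2.

Definition eps (u : series) : K := u None.

(* Left division by a word w, determined by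
     sum w_(1) \ (w_(2) v) = eps(w) v = 0,
   i.e.  w \ v = - sum_{(w_(1), w_(2)), deg w_(1) < deg w} w_(1) \ (w_(2) v)
   (the term w_(1) = w, w_(2) = 1 has coefficient 1), with 1 \ v = v. *)
Fixpoint ldivw (fuel : nat) (w : word) (v : series) : series :=
  match fuel with
  | 0 => zeroS
  | f.+1 => fun m =>
      - (\sum_(m1 <- monos_le (wdeg w).-1) \sum_(m2 <- monos_le (wdeg w))
           deltaw w m1 m2 *
           (match m1 with
            | None => mulS (monoS m2) v
            | Some w1 => ldivw f w1 (mulS (monoS m2) v)
            end) m)
  end.

Definition ldiv (u v : series) : series :=
  fun m => u None * v m +
     \sum_(w <- flatten [seq words i | i <- iota 1 (deg m)])
        u (Some w) * ldivw (wdeg w) w v m.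

Definition lnprod (s : seq series) : series :=
  if s is a :: s' then foldl mulS a s' else oneS.

(* p(x1..xm; y1..yn; z) = sum (X_(1) Y_(1)) \ (X_(2), Y_(2), z) *)
Definition pS (xs ys : seq series) (z : series) : series :=
  fun m =>
    let d := deg m in
    let DX := Delta (lnprod xs) in
    let DY := Delta (lnprod ys) in
    \sum_(a1 <- monos_le d) \sum_(a2 <- monos_le d)
    \sum_(b1 <- monos_le d) \sum_(b2 <- monos_le d)
      DX a1 a2 * DY b1 b2 *
      ldiv (mulS (monoS a1) (monoS b1)) (assocS (monoS a2) (monoS b2) z) m.

Definition brk (xs : seq series) (b c : series) : series :=
  addS (oppS (pS xs [:: b] c)) (pS xs [:: c] b).

Definition PhiS (m n : nat) (xs : 'I_m -> series) (ys : 'I_n.+1 -> series)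
  : series :=
  fun mo =>
    ((m`!)%:R * ((n.+1)`!)%:R)^-1 *
    \sum_(s : 'S_m) \sum_(t : 'S_n.+1)
      pS [seq xs (s i) | i <- enum 'I_m]
         [seq ys (t (lift ord_max i)) | i <- enum 'I_n]
         (ys (t ord_max)) mo.

Definition q (a : int) (b : nat) : K := a%:~R / b%:R.

Definition sumS (s : seq series) : series := foldr addS zeroS s.

Definition rhs : series :=
  let x := xS in let y := yS in
  let xy := commS x y in
  let ang1 (a b c : series) := brk [:: a] b c in
  let ang2 (a a' b c : series) := brk [:: a; a'] b c in
  let Phi_x_yy := PhiS (fun _ : 'I_1 => x) (fun _ : 'I_2 => y) in
  let Phi_xx_yy := PhiS (fun _ : 'I_2 => x) (fun _ : 'I_2 => y) in
  let Phi_x_yyy := PhiS (fun _ : 'I_1 => x) (fun _ : 'I_3 => y) in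
  sumS [::
    x; y; scaleS (q 1 2) xy;
    scaleS (q 1 12) (commS x xy);
    scaleS (q (-1) 3) (ang1 x x y);
    scaleS (q (-1) 12) (commS y xy);
    scaleS (q (-1) 6) (ang1 y x y);
    scaleS (q (-1) 2) Phi_x_yy;
    scaleS (q (-1) 24) (ang1 x x xy);
    scaleS (q (-1) 12) (commS x (ang1 x x y));
    scaleS (q (-1) 8) (ang2 x x x y);
    scaleS (q 1 24) (commS (commS x xy) y);
    scaleS (q (-1) 24) (commS x (ang1 y x y));
    scaleS (q (-1) 4) Phi_xx_yy;
    scaleS (q (-1) 4) (commS x Phi_x_yy);
    scaleS (q (-1) 24) (commS (ang1 x x y) y);
    scaleS (q (-1) 24) (ang1 x xy y);
    scaleS (q (-1) 6) (ang2 x y x y);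
    scaleS (q 1 24) (ang2 y x x y);
    scaleS (q 1 12) (commS Phi_x_yy y);
    scaleS (q 1 24) (ang1 y y xy);
    scaleS (q (-1) 24) (ang2 y y x y);
    scaleS (q (-1) 6) Phi_x_yyy ].

End Series.

(* Main.v *)
Require Import Defs.
From HB Require Import structures.
From mathcomp Require Import all_boot all_order all_algebra all_fingroup.
From Stdlib Require Import FunctionalExtensionality.
From mathcomp Require Import zify.
Set Implicit Arguments. Unset Strict Implicit. Unset Printing Implicit Defensive.
Import Order.TTheory GRing.Theory.
Local Open Scope ring_scope.


Lemma wdeg_gt0 w : (0 < wdeg w)%N.
Proof. by elim: w => //= a Ha b Hb; rewrite addn_gt0 Ha. Qed.

Lemma facts_deg m p : p \in facts m -> (deg p.1 + deg p.2 = deg m)%N.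
Proof.
case: m => [[| |a b]|] /=; rewrite !inE.
- by case/orP => /eqP ->.
- by case/orP => /eqP ->.
- by case/or3P => /eqP -> //=; rewrite addn0.
- by move/eqP ->.
Qed.

Lemma wordsF_deg f d w : w \in wordsF f d -> wdeg w = d.
Proof.
elim: f d w => [|f IH] d w //=.
case: eqP => [-> | dn1]; first by rewrite !inE => /orP [] /eqP ->.
case/flatten_mapP => i; rewrite mem_iota => /andP [i1 id].
case/flatten_mapP => a /IH ai /mapP [b /IH bd ->] /=.
rewrite bd -ai subnKC //.
case: d id {dn1 bd} => [|d'] /= id.
  by move: id; rewrite add1n ltnS leqn0 => /eqP i0; rewrite i0 in i1.
by rewrite ai; apply: ltnW; rewrite -add1n.
Qed.

Lemma words_deg d w : w \in words d -> wdeg w = d.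
Proof. exact: wordsF_deg. Qed.

Lemma wordsF_complete w f : (wdeg w <= f)%N -> w \in wordsF f (wdeg w).
Proof.
elim: w f => [| |a IHa b IHb] [|f] //=; rewrite ?inE ?eqxx ?orbT //.
  by move=> H; move: (leq_trans (wdeg_gt0 a) (leq_trans (leq_addr _ _) H)).
move=> H.
have ga := wdeg_gt0 a; have gb := wdeg_gt0 b.
case: ifP => [/eqP e|_]; first by move: (leq_add ga gb); rewrite e.
apply/flatten_mapP; exists (wdeg a).
  rewrite mem_iota add1n ga /= prednK; last by rewrite addn_gt0 ga.
  by rewrite -{1}(addn0 (wdeg a)) ltn_add2l.
apply/flatten_mapP; exists a.
  apply: IHa; rewrite -ltnS; apply: leq_trans H; by rewrite -addn1 leq_add2l.
rewrite addKn; apply: map_f; apply: IHb.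
rewrite -ltnS; apply: leq_trans H; by rewrite -add1n leq_add2r.
Qed.

Lemma monos_le_complete m n : (deg m <= n)%N -> m \in monos_le n.
Proof.
case: m => [w|] /= H; rewrite /monos_le inE //=.
apply: map_f; apply/flatten_mapP; exists (wdeg w).
  by rewrite mem_iota add1n wdeg_gt0 ltnS.
exact: wordsF_complete.
Qed.

Lemma monos_le_cat k d : (k <= d)%N ->
  monos_le d = monos_le k ++
     [seq Some w | w <- flatten [seq words i | i <- iota k.+1 (d - k)]].
Proof.
move=> kd; rewrite /monos_le -{1}(subnKC kd) iotaD map_cat flatten_cat map_cat.
by rewrite add1n.
Qed.

Lemma monos_le_tail k d m :
  m \in [seq Some w | w <- flatten [seq words i | i <- iota k.+1 (d - k)]] ->
  (k < deg m)%N.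
Proof.
case/mapP => w /flatten_mapP [i]; rewrite mem_iota => /andP [ki _] /words_deg wi -> /=.
by rewrite wi.
Qed.

Section Gen.
Variable K : fieldType.
Implicit Types u v z : series K.

Definition homog k u := forall m, deg m != k -> u m = 0.

Lemma deltaw_deg w m1 m2 : (deg m1 + deg m2 != wdeg w)%N -> deltaw K w m1 m2 = 0.
Proof.
elim: w m1 m2 => [| |a IHa b IHb] m1 m2 /=.
- by case: m1 => [[| |? ?]|]; case: m2 => [[| |? ?]|];
   rewrite /addT /tens /= ?mulr0 ?mul0r ?addr0.
- by case: m1 => [[| |? ?]|]; case: m2 => [[| |? ?]|];
   rewrite /addT /tens /= ?mulr0 ?mul0r ?addr0.
move=> H; rewrite /mulT big1_seq // => p /andP [_ pm1]; rewrite big1_seq // => q /andP [_ qm2].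
have [Ha|Ha] := eqVneq (deg p.1 + deg q.1)%N (wdeg a); last by rewrite IHa ?mul0r.
have [Hb|Hb] := eqVneq (deg p.2 + deg q.2)%N (wdeg b); last by rewrite IHb ?mulr0.
move: H; rewrite -(facts_deg pm1) -(facts_deg qm2) -Ha -Hb.
by rewrite addnACA eqxx.
Qed.

Lemma Delta_deg0 k u m1 m2 : homog k u -> (0 < k)%N -> (deg m1 + deg m2 != k)%N ->
  Delta u m1 m2 = 0.
Proof.
move=> hu k0 H; rewrite /Delta big1 // => [[w|]] _ /=.
  have [e|e] := eqVneq (wdeg w) k; last by rewrite hu ?mul0r.
  by rewrite deltaw_deg ?mulr0 // e.
by rewrite hu ?mul0r // eq_sym -lt0n.
Qed.

Lemma sum2_restrict k d (F : mono -> mono -> K) : (k <= d)%N ->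
  (forall a1 a2, (deg a1 + deg a2 != k)%N -> F a1 a2 = 0) ->
  \sum_(a1 <- monos_le d) \sum_(a2 <- monos_le d) F a1 a2 =
  \sum_(a1 <- monos_le k) \sum_(a2 <- monos_le k)
     (if (deg a1 + deg a2 != k)%N then 0 else F a1 a2).
Proof.
move=> kd HF; rewrite (monos_le_cat kd); set L := monos_le k; set T := map _ _.
rewrite big_cat /=.
rewrite [X in _ + X]big1_seq ?addr0; last first.
  move=> a1 /andP [_ /monos_le_tail a1k]; rewrite big1 // => a2 _; apply: HF.
  by rewrite neq_ltn; apply/orP; right; apply: leq_trans a1k (leq_addr _ _).
apply: eq_bigr => a1 _; rewrite -cat_cons big_cat /=.
rewrite [X in _ + X]big1_seq ?addr0; last first.
  move=> a2 /andP [_ /monos_le_tail a2k]; apply: HF.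
  by rewrite neq_ltn; apply/orP; right; apply: leq_trans a2k (leq_addl _ _).
by apply: eq_bigr => a2 _; case: ifP => // /HF.
Qed.

Definition cpS kx ky (xs ys : seq (series K)) z : series K :=
 fun m =>
  if ((kx <= deg m) && (ky <= deg m))%N then
  let DX := Delta (lnprod xs) in let DY := Delta (lnprod ys) in
  \sum_(a1 <- monos_le kx) \sum_(a2 <- monos_le kx)
    (if (deg a1 + deg a2 != kx)%N then 0 else
    let c := DX a1 a2 in if c == 0 then 0 else
    c * \sum_(b1 <- monos_le ky) \sum_(b2 <- monos_le ky)
    (if (deg b1 + deg b2 != ky)%N then 0 else
    let e := DY b1 b2 in if e == 0 then 0 else
      e * ldiv (mulS (monoS K a1) (monoS K b1)) (assocS (monoS K a2) (monoS K b2) z) m))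
  else pS xs ys z m.

Lemma pS_c kx ky xs ys z : homog kx (lnprod xs) -> homog ky (lnprod ys) ->
  (0 < kx)%N -> (0 < ky)%N -> pS xs ys z = cpS kx ky xs ys z.
Proof.
move=> hx hy kx0 ky0; apply: functional_extensionality => m.
rewrite /cpS; case: ifP => // /andP [kxd kyd]; rewrite /pS /=.
set DX := Delta (lnprod xs); set DY := Delta (lnprod ys).
rewrite (sum2_restrict kxd); last first.
  move=> a1 a2 H; rewrite big1 // => b1 _; rewrite big1 // => b2 _.
  by rewrite /DX (Delta_deg0 hx kx0) // !mul0r.
apply: eq_bigr => a1 _; apply: eq_bigr => a2 _; case: ifP => // _.
case: eqP => [->|_].
  by rewrite big1 // => b1 _; rewrite big1 // => b2 _; rewrite !mul0r.
rewrite (sum2_restrict kyd); last first.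
  by move=> b1 b2 H; rewrite /DY (Delta_deg0 hy ky0) // mulr0 mul0r.
rewrite mulr_sumr; apply: eq_bigr => b1 _; rewrite mulr_sumr; apply: eq_bigr => b2 _.
case: ifP => _; first by rewrite mulr0.
case: eqP => [e0|_]; first by rewrite e0 !(mulr0, mul0r).
by rewrite mulrA.
Qed.


Lemma homog_mulS k1 k2 u v : homog k1 u -> homog k2 v -> homog ((k1 + k2)%N) (mulS u v).
Proof.
move=> hu hv m H; rewrite /mulS big1_seq // => p /andP [_ pm].
have [e1|e1] := eqVneq (deg p.1) k1; last by rewrite hu ?mul0r.
rewrite hv ?mulr0 //; apply: contra H => /eqP e2.
by rewrite -(facts_deg pm) e1 e2.
Qed.

Lemma homog_monoS n : homog (deg n) (monoS K n).
Proof. by move=> m H; rewrite /monoS; case: eqP => // e; rewrite e eqxx in H. Qed.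

Lemma homog_addS k u v : homog k u -> homog k v -> homog k (addS u v).
Proof. by move=> hu hv m H; rewrite /addS hu ?hv ?addr0. Qed.

Lemma homog_oppS k u : homog k u -> homog k (oppS u).
Proof. by move=> hu m H; rewrite /oppS hu ?oppr0. Qed.

Lemma homog_scaleS k c u : homog k u -> homog k (scaleS c u).
Proof. by move=> hu m H; rewrite /scaleS hu ?mulr0. Qed.

Lemma homog_commS k1 k2 u v : homog k1 u -> homog k2 v -> homog ((k1 + k2)%N) (commS u v).
Proof.
move=> hu hv; apply: homog_addS; first exact: homog_mulS.
by have := homog_mulS hv hu; rewrite addnC => h; apply: homog_oppS.
Qed.

Lemma homog_assocS k1 k2 k3 u v w : homog k1 u -> homog k2 v -> homog k3 w ->
  homog ((k1 + k2 + k3)%N) (assocS u v w).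
Proof.
move=> hu hv hw; apply: homog_addS; first by do 2 apply: homog_mulS => //.
by have := homog_mulS hu (homog_mulS hv hw); rewrite addnA => h; apply: homog_oppS.
Qed.

Lemma homog_xS : homog 1 (xS K).
Proof. by case=> [[| |? ?]|]. Qed.
Lemma homog_yS : homog 1 (yS K).
Proof. by case=> [[| |? ?]|]. Qed.

Lemma homog_ldivw f w v kv : homog kv v -> homog ((wdeg w + kv)%N) (ldivw f w v).
Proof.
elim: f w v kv => [|f IH] w v kv hv m H //=.
rewrite big1 ?oppr0 // => m1 _; rewrite big1 // => m2 _.
have [e|e] := eqVneq (deg m1 + deg m2)%N (wdeg w); last by rewrite deltaw_deg ?mul0r.
case: m1 e => [w1|] /= e.
  have hv' : homog (deg m2 + kv)%N (mulS (monoS K m2) v) := homog_mulS (homog_monoS (n:=m2)) hv.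
  by rewrite (IH w1 _ _ hv') ?mulr0 // addnA e.
have e' : deg m2 = wdeg w by rewrite -e.
by rewrite (homog_mulS (homog_monoS (n:=m2)) hv) ?mulr0 // e'.
Qed.

Lemma homog_ldiv ku kv u v : homog ku u -> homog kv v -> homog ((ku + kv)%N) (ldiv u v).
Proof.
move=> hu hv m H; rewrite /ldiv big1 ?addr0 => [|w _].
  have [k0|k0] := eqVneq ku 0%N; last by rewrite hu ?mul0r // eq_sym.
  by rewrite hv ?mulr0 // -(add0n kv) -k0.
have [e|e] := eqVneq (wdeg w) ku; last by rewrite hu ?mul0r.
by rewrite (homog_ldivw (wdeg w) (w:=w) hv) ?mulr0 // e.
Qed.

Lemma homog_pS kx ky kz xs ys z : homog kx (lnprod xs) -> homog ky (lnprod ys) ->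
  homog kz z -> (0 < kx)%N -> (0 < ky)%N -> homog ((kx + ky + kz)%N) (pS xs ys z).
Proof.
move=> hx hy hz kx0 ky0 m H; rewrite /pS /=.
rewrite big1 // => a1 _; rewrite big1 // => a2 _; rewrite big1 // => b1 _.
rewrite big1 // => b2 _.
have [e1|e1] := eqVneq (deg a1 + deg a2)%N kx; last by rewrite (Delta_deg0 hx kx0) ?mul0r.
have [e2|e2] := eqVneq (deg b1 + deg b2)%N ky; last by rewrite (Delta_deg0 hy ky0) // mulr0 mul0r.
rewrite (homog_ldiv (homog_mulS (homog_monoS (n:=a1)) (homog_monoS (n:=b1)))
   (homog_assocS (homog_monoS (n:=a2)) (homog_monoS (n:=b2)) hz)) ?mulr0 //.
rewrite -e1 -e2 in H; apply: contra H => /eqP ->.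
suff -> : forall a b c d e : nat, (a + c + (b + d + e) = a + b + (c + d) + e)%N by [].
by move=> *; lia.
Qed.

Lemma monoS_None : monoS K None = oneS K.
Proof. by apply: functional_extensionality => -[]. Qed.

Lemma mulS1l u : mulS (oneS K) u = u.
Proof.
apply: functional_extensionality => -[[| |a b]|];
  by rewrite /mulS !big_cons ?big_nil /= ?mul1r ?mul0r ?addr0.
Qed.

Lemma mulS1r u : mulS u (oneS K) = u.
Proof.
apply: functional_extensionality => -[[| |a b]|];
  by rewrite /mulS !big_cons ?big_nil /= ?mulr1 ?mulr0 ?addr0 ?add0r.
Qed.

Lemma mulS0r u : mulS u (zeroS K) = zeroS K.
Proof.
by apply: functional_extensionality => m; rewrite /mulS big1 // => p _; rewrite mulr0.
Qed.

Lemma ldivw0 f w : ldivw f w (zeroS K) = zeroS K.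
Proof.
elim: f w => [|f IH] w //=; apply: functional_extensionality => m.
rewrite big1 ?oppr0 // => m1 _; rewrite big1 // => m2 _.
by case: m1 => [w1|]; rewrite mulS0r ?IH /zeroS mulr0.
Qed.

Lemma ldiv0 u : ldiv u (zeroS K) = zeroS K.
Proof.
apply: functional_extensionality => m; rewrite /ldiv big1 ?mulr0 ?addr0 // => w _.
by rewrite ldivw0 /zeroS mulr0.
Qed.

Lemma assoc1m a z : assocS (monoS K None) a z = zeroS K.
Proof.
rewrite monoS_None /assocS !mulS1l; apply: functional_extensionality => m.
by rewrite /addS /oppS subrr.
Qed.

Lemma assocm1 a z : assocS a (monoS K None) z = zeroS K.
Proof.
rewrite monoS_None /assocS mulS1l mulS1r; apply: functional_extensionality => m.
by rewrite /addS /oppS subrr.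
Qed.

Definition cldiv u v : series K := fun m =>
  u None * v m + \sum_(w <- flatten [seq words i | i <- iota 1 (deg m)])
    (let c := u (Some w) in if c == 0 then 0 else c * ldivw (wdeg w) w v m).

Lemma ldiv_c : @ldiv K = cldiv.
Proof.
apply: functional_extensionality => u; apply: functional_extensionality => v.
apply: functional_extensionality => m; rewrite /ldiv /cldiv; congr (_ + _).
by apply: eq_bigr => w _ /=; case: eqP => // ->; rewrite mul0r.
Qed.

Definition spD k (D : mono -> mono -> K) : seq ((mono * mono) * K) :=
  [seq pc <- [seq (p, D p.1 p.2) | p <- [seq p <- [seq (a1, a2) | a1 <- monos_le k, a2 <- monos_le k]
          | (deg p.1 + deg p.2 == k)%N && (p.2 != None)]]
     | pc.2 != 0].

Lemma sum_sp k (D H : mono -> mono -> K) : (forall a1, H a1 None = 0) ->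
  \sum_(a1 <- monos_le k) \sum_(a2 <- monos_le k)
     (if (deg a1 + deg a2 != k)%N then 0 else D a1 a2 * H a1 a2)
  = \sum_(pc <- spD k D) pc.2 * H pc.1.1 pc.1.2.
Proof.
move=> H0; rewrite /spD [RHS]big_filter [RHS]big_map [RHS]big_filter_cond [RHS]big_mkcond [RHS]big_allpairs /=.
apply: eq_bigr => a1 _; apply: eq_bigr => a2 _ /=.
case: eqP => [e|ne] //=; case: a2 {e} => [w|] /=; last by rewrite H0 mulr0.
by case: eqP => [->|_]; rewrite ?mul0r.
Qed.

Definition cpS2 kx ky kz (xs ys : seq (series K)) z : series K :=
  let SX := spD kx (Delta (lnprod xs)) in let SY := spD ky (Delta (lnprod ys)) in
  fun m => if (deg m != kx + ky + kz)%N then 0 else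
    \sum_(pc <- SX) \sum_(qe <- SY) pc.2 * (qe.2 *
        cldiv (mulS (monoS K pc.1.1) (monoS K qe.1.1))
              (assocS (monoS K pc.1.2) (monoS K qe.1.2) z) m).

Lemma pS_c2 kx ky kz xs ys z : homog kx (lnprod xs) -> homog ky (lnprod ys) ->
  homog kz z -> (0 < kx)%N -> (0 < ky)%N -> pS xs ys z = cpS2 kx ky kz xs ys z.
Proof.
move=> hx hy hz kx0 ky0; apply: functional_extensionality => m.
rewrite /cpS2; case: ifP => [H|/negbFE/eqP dm].
  by rewrite (homog_pS hx hy hz).
have kxd : (kx <= deg m)%N by rewrite dm -addnA leq_addr.
have kyd : (ky <= deg m)%N by rewrite dm; apply: leq_trans (leq_addl kx ky) (leq_addr _ _).
rewrite /pS /=.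
set DX := Delta (lnprod xs); set DY := Delta (lnprod ys).
rewrite (sum2_restrict kxd); last first.
  move=> a1 a2 H; rewrite big1 // => b1 _; rewrite big1 // => b2 _.
  by rewrite /DX (Delta_deg0 hx kx0) // !mul0r.
rewrite -ldiv_c.
pose H1 := fun a1 a2 => \sum_(qe <- spD ky DY) qe.2 *
   ldiv (mulS (monoS K a1) (monoS K qe.1.1)) (assocS (monoS K a2) (monoS K qe.1.2) z) m.
transitivity (\sum_(pc <- spD kx DX) pc.2 * H1 pc.1.1 pc.1.2); last first.
  by apply: eq_bigr => pc _; rewrite /H1 mulr_sumr.
rewrite -(@sum_sp kx DX H1); last first.
  by move=> a1; rewrite /H1 big1 // => qe _; rewrite assoc1m ldiv0 /zeroS mulr0.
apply: eq_bigr => a1 _; apply: eq_bigr => a2 _; case: ifP => // _.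
rewrite (sum2_restrict kyd); last first.
  by move=> b1 b2 H; rewrite /DY (Delta_deg0 hy ky0) // mulr0 mul0r.
pose H2 := fun b1 b2 =>
    ldiv (mulS (monoS K a1) (monoS K b1)) (assocS (monoS K a2) (monoS K b2) z) m.
transitivity (DX a1 a2 * \sum_(qe <- spD ky DY) qe.2 * H2 qe.1.1 qe.1.2); last by [].
rewrite -(@sum_sp ky DY H2); last by move=> b1; rewrite /H2 assocm1 ldiv0.
rewrite mulr_sumr; apply: eq_bigr => b1 _; rewrite mulr_sumr; apply: eq_bigr => b2 _.
by case: ifP => _; rewrite ?mulr0 // mulrA.
Qed.

End Gen.


Lemma map_const_nseq (T U : Type) (a : U) (s : seq T) : [seq a | _ <- s] = nseq (size s) a.
Proof. by elim: s => //= _ s ->. Qed.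

Section Gen2.
Variable K : fieldType.

Lemma PhiS_const (c0 : [pchar K] =i pred0) (m n : nat) (a b : series K) :
  PhiS (fun _ : 'I_m => a) (fun _ : 'I_n.+1 => b) = pS (nseq m a) (nseq n b) b.
Proof.
apply: functional_extensionality => mo; rewrite /PhiS.
under eq_bigr do under eq_bigr do rewrite !map_const_nseq !size_enum_ord.
rewrite sumr_const sumr_const !card_Sn.
rewrite -mulrnA (mulnC ((n.+1)`!)) -[pS _ _ _ mo *+ _]mulr_natl (natrM _ (m`!) ((n.+1)`!)) mulKf //.
by rewrite mulf_neq0 // (pcharf0P _).1 // -lt0n fact_gt0.
Qed.

Definition rhs2 : series K :=
  let x := xS K in let y := yS K in
  let xy := commS x y in
  let ang1 (a b c : series K) := brk [:: a] b c in
  let ang2 (a a' b c : series K) := brk [:: a; a'] b c in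
  let Phi_x_yy := pS [:: x] [:: y] y in
  let Phi_xx_yy := pS [:: x; x] [:: y] y in
  let Phi_x_yyy := pS [:: x] [:: y; y] y in
  sumS [::
    x; y; scaleS (q K 1 2) xy;
    scaleS (q K 1 12) (commS x xy);
    scaleS (q K (-1) 3) (ang1 x x y);
    scaleS (q K (-1) 12) (commS y xy);
    scaleS (q K (-1) 6) (ang1 y x y);
    scaleS (q K (-1) 2) Phi_x_yy;
    scaleS (q K (-1) 24) (ang1 x x xy);
    scaleS (q K (-1) 12) (commS x (ang1 x x y));
    scaleS (q K (-1) 8) (ang2 x x x y);
    scaleS (q K 1 24) (commS (commS x xy) y);
    scaleS (q K (-1) 24) (commS x (ang1 y x y));
    scaleS (q K (-1) 4) Phi_xx_yy;
    scaleS (q K (-1) 4) (commS x Phi_x_yy);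
    scaleS (q K (-1) 24) (commS (ang1 x x y) y);
    scaleS (q K (-1) 24) (ang1 x xy y);
    scaleS (q K (-1) 6) (ang2 x y x y);
    scaleS (q K 1 24) (ang2 y x x y);
    scaleS (q K 1 12) (commS Phi_x_yy y);
    scaleS (q K 1 24) (ang1 y y xy);
    scaleS (q K (-1) 24) (ang2 y y x y);
    scaleS (q K (-1) 6) Phi_x_yyy ].

Lemma rhs_rhs2 (c0 : [pchar K] =i pred0) : rhs K = rhs2.
Proof. by rewrite /rhs /rhs2 !PhiS_const. Qed.

Definition cbrk kx kb kc (xs : seq (series K)) (b c : series K) : series K :=
  addS (oppS (cpS2 kx kb kc xs [:: b] c)) (cpS2 kx kc kb xs [:: c] b).

Lemma brk_c kx kb kc xs b c : homog kx (lnprod xs) -> homog kb b -> homog kc c ->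
  (0 < kx)%N -> (0 < kb)%N -> (0 < kc)%N -> brk xs b c = cbrk kx kb kc xs b c.
Proof.
by move=> hx hb hc kx0 kb0 kc0; rewrite /brk /cbrk (pS_c2 (kx:=kx) (ky:=kb) (kz:=kc)) // (pS_c2 (kx:=kx) (ky:=kc) (kz:=kb)).
Qed.

Definition crhs : series K :=
  let x := xS K in let y := yS K in
  let xy := commS x y in
  let Phi_x_yy := cpS2 1 1 1 [:: x] [:: y] y in
  let Phi_xx_yy := cpS2 2 1 1 [:: x; x] [:: y] y in
  let Phi_x_yyy := cpS2 1 2 1 [:: x] [:: y; y] y in
  let A1 := cbrk 1 1 1 [:: x] x y in
  let A2 := cbrk 1 1 1 [:: y] x y in
  sumS [::
    x; y; scaleS (q K 1 2) xy;
    scaleS (q K 1 12) (commS x xy);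
    scaleS (q K (-1) 3) A1;
    scaleS (q K (-1) 12) (commS y xy);
    scaleS (q K (-1) 6) A2;
    scaleS (q K (-1) 2) Phi_x_yy;
    scaleS (q K (-1) 24) (cbrk 1 1 2 [:: x] x xy);
    scaleS (q K (-1) 12) (commS x A1);
    scaleS (q K (-1) 8) (cbrk 2 1 1 [:: x; x] x y);
    scaleS (q K 1 24) (commS (commS x xy) y);
    scaleS (q K (-1) 24) (commS x A2);
    scaleS (q K (-1) 4) Phi_xx_yy;
    scaleS (q K (-1) 4) (commS x Phi_x_yy);
    scaleS (q K (-1) 24) (commS A1 y);
    scaleS (q K (-1) 24) (cbrk 1 2 1 [:: x] xy y);
    scaleS (q K (-1) 6) (cbrk 2 1 1 [:: x; y] x y);
    scaleS (q K 1 24) (cbrk 2 1 1 [:: y; x] x y);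
    scaleS (q K 1 12) (commS Phi_x_yy y);
    scaleS (q K 1 24) (cbrk 1 1 2 [:: y] y xy);
    scaleS (q K (-1) 24) (cbrk 2 1 1 [:: y; y] x y);
    scaleS (q K (-1) 6) Phi_x_yyy ].

Let hx := homog_xS K.
Let hy := homog_yS K.
Let hxy : homog 2 (commS (xS K) (yS K)) := homog_commS hx hy.

Lemma rhs2_crhs : rhs2 = crhs.
Proof.
rewrite /rhs2 /crhs; cbv zeta.
rewrite (brk_c (kx:=1) (kb:=1) (kc:=1) (xs:=[:: xS K]) (b:=(xS K)) (c:=(yS K))) //.
rewrite (brk_c (kx:=1) (kb:=1) (kc:=1) (xs:=[:: yS K]) (b:=(xS K)) (c:=(yS K))) //.
rewrite (brk_c (kx:=1) (kb:=1) (kc:=2) (xs:=[:: xS K]) (b:=(xS K)) (c:=_)) //.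
rewrite (brk_c (kx:=1) (kb:=2) (kc:=1) (xs:=[:: xS K]) (b:=_) (c:=(yS K))) //.
rewrite (brk_c (kx:=1) (kb:=1) (kc:=2) (xs:=[:: yS K]) (b:=(yS K)) (c:=_)) //.
rewrite (brk_c (kx:=2) (kb:=1) (kc:=1) (xs:=[:: xS K; xS K]) (b:=(xS K)) (c:=(yS K))) //;
  last exact: homog_mulS.
rewrite (brk_c (kx:=2) (kb:=1) (kc:=1) (xs:=[:: xS K; yS K]) (b:=(xS K)) (c:=(yS K))) //;
  last exact: homog_mulS.
rewrite (brk_c (kx:=2) (kb:=1) (kc:=1) (xs:=[:: yS K; xS K]) (b:=(xS K)) (c:=(yS K))) //;
  last exact: homog_mulS.
rewrite (brk_c (kx:=2) (kb:=1) (kc:=1) (xs:=[:: yS K; yS K]) (b:=(xS K)) (c:=(yS K))) //;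
  last exact: homog_mulS.
rewrite (pS_c2 (kx:=1) (ky:=1) (kz:=1) (xs:=[:: xS K]) (ys:=[:: yS K]) (z:=(yS K))) //.
rewrite (pS_c2 (kx:=2) (ky:=1) (kz:=1) (xs:=[:: xS K; xS K]) (ys:=[:: yS K]) (z:=(yS K))) //;
  last exact: homog_mulS.
rewrite (pS_c2 (kx:=1) (ky:=2) (kz:=1) (xs:=[:: xS K]) (ys:=[:: yS K; yS K]) (z:=(yS K))) //.
exact: homog_mulS.
Qed.

End Gen2.

Section Gen3.
Variable K : fieldType.
Definition cexp (u : series K) : series K :=
  fun m => \sum_(i <- index_iota 0 (deg m).+1) powS u i m / (i`!)%:R.
Lemma exp_c : @exp_l K = cexp.
Proof.
apply: functional_extensionality => u; apply: functional_extensionality => m.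
by rewrite /exp_l /cexp big_mkord.
Qed.
End Gen3.


Section Transport.
Variable K : fieldType.
Hypothesis c0 : [pchar K] =i pred0.

Lemma intr_neq0 (z : int) : z != 0 -> (z%:~R : K) != 0.
Proof.
case: z => n /= nz.
  by rewrite -[_%:~R]/(n%:R : K) (pcharf0P _).1 // -lt0n lt0n; case: n nz.
by rewrite NegzE mulrNz oppr_eq0 -[_%:~R]/(n.+1%:R : K) (pcharf0P _).1.
Qed.

Let nz_den (x : rat) : (denq x)%:~R != 0 :> K.
Proof. by apply: intr_neq0; rewrite denq_neq0. Qed.

Lemma ratrB (x y : rat) : ratr (x - y) = ratr x - ratr y :> K.
Proof.
have injZtoQ: @injective rat int intr by apply: intr_inj.
apply: (canLR (mulfK (nz_den _))); apply: (mulIf (nz_den x)).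
rewrite mulrAC mulrBl divfK ?nz_den // mulrAC -!rmorphM.
apply: (mulIf (nz_den y)); rewrite mulrAC mulrBl divfK ?nz_den //.
rewrite -!(rmorphM, rmorphB); congr _%:~R; apply: injZtoQ.
rewrite !(rmorphM, rmorphB) /= [_ - _]lock /= -lock !numqE.
by rewrite (mulrAC y) -!mulrBl -mulrA mulrAC !mulrA.
Qed.

Lemma ratr0 : ratr 0 = 0 :> K.
Proof. exact: (ratr_nat K 0). Qed.

Lemma ratrN (x : rat) : ratr (- x) = - ratr x :> K.
Proof. by rewrite -sub0r ratrB ratr0 sub0r. Qed.

Lemma ratrD (x y : rat) : ratr (x + y) = ratr x + ratr y :> K.
Proof. by have := ratrB x (- y); rewrite opprK ratrN opprK. Qed.

Lemma ratr1 : ratr 1 = 1 :> K.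
Proof. exact: (ratr_nat K 1). Qed.

Lemma ratrM (x y : rat) : ratr (x * y) = ratr x * ratr y :> K.
Proof.
have injZtoQ: @injective rat int intr by apply: intr_inj.
rewrite /ratr mulrC mulrAC; apply: canLR (mulKf (nz_den _)) _; rewrite !mulrA.
do 2!apply: canRL (mulfK (nz_den _)) _; rewrite -!rmorphM; congr _%:~R.
apply: injZtoQ; rewrite !rmorphM [x * y]lock /= !numqE -lock.
by rewrite -!mulrA mulrA mulrCA -!mulrA (mulrCA y).
Qed.

Lemma ratr_neq0 (x : rat) : x != 0 -> ratr x != 0 :> K.
Proof.
move=> nx; rewrite /ratr mulf_neq0 ?invr_eq0 ?nz_den //.
by apply: intr_neq0; rewrite numq_eq0.
Qed.

Lemma ratrV (x : rat) : ratr (x^-1) = (ratr x)^-1 :> K.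
Proof.
have [->|nx] := eqVneq x 0; first by rewrite invr0 ratr0 invr0.
have h : ratr x * ratr x^-1 = 1 :> K by rewrite -ratrM mulfV // ratr1.
by rewrite -[LHS]mul1r -(mulVf (ratr_neq0 nx)) -mulrA h mulr1.
Qed.

Lemma ratr_nat' n : ratr n%:R = n%:R :> K.
Proof. exact: ratr_nat. Qed.

Lemma ratr_sum (I : Type) (s : seq I) (F : I -> rat) :
  ratr (\sum_(i <- s) F i) = \sum_(i <- s) ratr (F i) :> K.
Proof. by apply: (big_morph _ ratrD ratr0). Qed.

Definition mapS (u : series rat) : series K := fun m => ratr (u m).
Definition mapT (u : tensor rat) : tensor K := fun m1 m2 => ratr (u m1 m2).

Lemma map_xS : mapS (xS rat) = xS K.
Proof. by apply: functional_extensionality => -[[| |? ?]|]; rewrite /mapS /= ?ratr0 ?ratr1. Qed.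
Lemma map_yS : mapS (yS rat) = yS K.
Proof. by apply: functional_extensionality => -[[| |? ?]|]; rewrite /mapS /= ?ratr0 ?ratr1. Qed.
Lemma map_oneS : mapS (oneS rat) = oneS K.
Proof. by apply: functional_extensionality => -[?|]; rewrite /mapS /= ?ratr0 ?ratr1. Qed.
Lemma map_zeroS : mapS (zeroS rat) = zeroS K.
Proof. by apply: functional_extensionality => ?; rewrite /mapS /= ?ratr0. Qed.
Lemma map_monoS n : mapS (monoS rat n) = monoS K n.
Proof. by apply: functional_extensionality => m; rewrite /mapS /monoS; case: eqP; rewrite ?ratr0 ?ratr1. Qed.

Lemma map_mulS u v : mapS (mulS u v) = mulS (mapS u) (mapS v).
Proof.
apply: functional_extensionality => m; rewrite /mapS /mulS ratr_sum.
by apply: eq_bigr => p _; rewrite ratrM.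
Qed.
Lemma map_addS u v : mapS (addS u v) = addS (mapS u) (mapS v).
Proof. by apply: functional_extensionality => m; rewrite /mapS /addS ratrD. Qed.
Lemma map_oppS u : mapS (oppS u) = oppS (mapS u).
Proof. by apply: functional_extensionality => m; rewrite /mapS /oppS ratrN. Qed.
Lemma map_scaleS c u : mapS (scaleS c u) = scaleS (ratr c) (mapS u).
Proof. by apply: functional_extensionality => m; rewrite /mapS /scaleS ratrM. Qed.
Lemma map_commS u v : mapS (commS u v) = commS (mapS u) (mapS v).
Proof. by rewrite /commS map_addS map_oppS !map_mulS. Qed.
Lemma map_assocS u v w : mapS (assocS u v w) = assocS (mapS u) (mapS v) (mapS w).
Proof. by rewrite /assocS map_addS map_oppS !map_mulS. Qed.
Lemma map_q a b : ratr (q rat a b) = q K a b.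
Proof. by rewrite /q ratrM ratrV ratr_int ratr_nat. Qed.
Lemma map_sumS l : mapS (sumS l) = sumS (map mapS l).
Proof. by elim: l => [|u l IH] /=; rewrite ?map_zeroS // map_addS IH. Qed.

Lemma map_tens u v : mapT (tens u v) = tens (mapS u) (mapS v).
Proof.
apply: functional_extensionality => m1; apply: functional_extensionality => m2.
by rewrite /mapT /tens ratrM.
Qed.
Lemma map_addT F G : mapT (addT F G) = addT (mapT F) (mapT G).
Proof.
apply: functional_extensionality => m1; apply: functional_extensionality => m2.
by rewrite /mapT /addT ratrD.
Qed.
Lemma map_mulT F G : mapT (mulT F G) = mulT (mapT F) (mapT G).
Proof.
apply: functional_extensionality => m1; apply: functional_extensionality => m2.
rewrite /mapT /mulT ratr_sum; apply: eq_bigr => p _; rewrite ratr_sum.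
by apply: eq_bigr => q' _; rewrite ratrM.
Qed.
Lemma map_deltaw w : mapT (deltaw rat w) = deltaw K w.
Proof.
elim: w => [| |a IHa b IHb] /=.
- by rewrite map_addT !map_tens map_xS map_oneS.
- by rewrite map_addT !map_tens map_yS map_oneS.
by rewrite map_mulT IHa IHb.
Qed.
Lemma map_delta_mono n : mapT (delta_mono rat n) = delta_mono K n.
Proof. by case: n => [w|] /=; rewrite ?map_deltaw // map_tens map_oneS. Qed.
Lemma map_Delta u : mapT (Delta u) = Delta (mapS u).
Proof.
apply: functional_extensionality => m1; apply: functional_extensionality => m2.
rewrite /mapT /Delta ratr_sum; apply: eq_bigr => w _.
by rewrite ratrM -(map_delta_mono w).
Qed.
Lemma map_lnprod l : mapS (lnprod l) = lnprod (map mapS l).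
Proof.
case: l => [|a l] /=; first exact: map_oneS.
by elim: l a => [|b l IH] a //=; rewrite IH map_mulS.
Qed.
Lemma map_ldivw f w v : mapS (ldivw f w v) = ldivw f w (mapS v).
Proof.
elim: f w v => [|f IH] w v /=; first exact: map_zeroS.
apply: functional_extensionality => m; rewrite /mapS ratrN ratr_sum; congr (- _).
apply: eq_bigr => m1 _; rewrite ratr_sum; apply: eq_bigr => m2 _.
rewrite ratrM -(map_deltaw w); congr (_ * _).
case: m1 => [w1|]; last by rewrite -/(mapS _ m) map_mulS map_monoS.
by rewrite -/(mapS _ m) IH map_mulS map_monoS.
Qed.
Lemma map_ldiv u v : mapS (ldiv u v) = ldiv (mapS u) (mapS v).
Proof.
apply: functional_extensionality => m; rewrite /mapS /ldiv ratrD ratrM ratr_sum.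
congr (_ + _); apply: eq_bigr => w _; rewrite ratrM.
by rewrite -/(mapS _ m) map_ldivw.
Qed.
Lemma map_pS xs ys z : mapS (pS xs ys z) = pS (map mapS xs) (map mapS ys) (mapS z).
Proof.
apply: functional_extensionality => m; rewrite /mapS /pS /= -!map_lnprod -!map_Delta.
rewrite ratr_sum; apply: eq_bigr => a1 _; rewrite ratr_sum; apply: eq_bigr => a2 _.
rewrite ratr_sum; apply: eq_bigr => b1 _; rewrite ratr_sum; apply: eq_bigr => b2 _.
rewrite !ratrM; congr (_ * _).
by rewrite -/(mapS _ m) -!map_monoS -map_mulS -map_assocS map_ldiv.
Qed.
Lemma map_brk xs b c : mapS (brk xs b c) = brk (map mapS xs) (mapS b) (mapS c).
Proof. by rewrite /brk map_addS map_oppS !map_pS. Qed.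

Lemma map_rhs2 : mapS (rhs2 rat) = rhs2 K.
Proof.
rewrite /rhs2; cbv zeta.
rewrite map_sumS.
by do 6 rewrite ?map_scaleS ?map_q ?map_commS ?map_brk ?map_pS ?map_xS ?map_yS /=.
Qed.

Lemma map_powS u n : mapS (powS u n) = powS (mapS u) n.
Proof. by elim: n => [|n IH] /=; rewrite ?map_oneS // map_mulS IH. Qed.
Lemma map_exp u : mapS (exp_l u) = exp_l (mapS u).
Proof.
apply: functional_extensionality => m; rewrite /mapS /exp_l ratr_sum.
by apply: eq_bigr => i _; rewrite ratrM ratrV ratr_nat -/(mapS _ m) map_powS.
Qed.

End Transport.


Section Log.
Variable K : fieldType.
Implicit Types u v : series K.

Lemma powS_None u n : u None = 0 -> powS u n.+1 None = 0.
Proof. by move=> hu; rewrite /= /mulS big_seq1 hu mulr0. Qed.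

Lemma powS_local u v d : (forall m, (deg m <= d)%N -> u m = v m) ->
  forall n m, (deg m <= d)%N -> powS u n m = powS v n m.
Proof.
move=> huv; elim=> [|n IH] m dm //=; rewrite /mulS; apply: eq_big_seq => p pm.
have e := facts_deg pm.
rewrite IH ?huv //; apply: leq_trans dm; rewrite -e; [exact: leq_addl | exact: leq_addr].
Qed.

Lemma exp_local u v m : (forall m', (deg m' <= deg m)%N -> u m' = v m') ->
  exp_l u m = exp_l v m.
Proof.
by move=> h; rewrite /exp_l; apply: eq_bigr => i _; rewrite (powS_local h).
Qed.

Definition tl u (w : word) : K :=
  \sum_(i < (wdeg w).-1) powS u i.+2 (Some w) / (i.+2`!)%:R.

Lemma exp_Some u w : u None = 0 -> exp_l u (Some w) = u (Some w) + tl u w.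
Proof.
move=> hu; rewrite /exp_l /tl /=; have := wdeg_gt0 w; case: (wdeg w) => // n _ /=.
rewrite !big_ord_recl /= mulS1l /= mul0r add0r divr1.
by [].
Qed.

Lemma exp_None u : exp_l u None = 1.
Proof. by rewrite /exp_l /= big_ord_recl big_ord0 /= divr1 addr0. Qed.

Lemma powS_Nd u n a b : u None = 0 ->
  powS u n.+2 (Some (Nd a b)) = powS u n.+1 (Some a) * u (Some b).
Proof.
move=> hu; change (powS u n.+2) with (mulS (powS u n.+1) u); rewrite {1}/mulS.
change (facts (Some (Nd a b))) with
  [:: (None, Some (Nd a b)); (Some (Nd a b), None); (Some a, Some b)].
by rewrite !big_cons big_nil powS_None // hu mul0r mulr0 !add0r addr0.
Qed.

Lemma tl_local u v w : u None = 0 -> v None = 0 ->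
  (forall m, (deg m < wdeg w)%N -> u m = v m) -> tl u w = tl v w.
Proof.
move=> hu hv; case: w => [| |a b] huv; rewrite /tl ?big_ord0 //.
apply: eq_bigr => i _; congr (_ / _).
rewrite !powS_Nd //.
have ga := wdeg_gt0 a; have gb := wdeg_gt0 b.
congr (_ * _).
  apply: (powS_local (u:=u) (v:=v) (d:=wdeg a)) => // m dm.
  apply: huv; apply: leq_ltn_trans dm _; rewrite -{1}(addn0 (wdeg a)) ltn_add2l //.
by apply: huv => /=; rewrite -{1}(add0n (wdeg b)) ltn_add2r.
Qed.

Fixpoint zapp (W : series K) (n : nat) : series K :=
  if n is n'.+1 then (fun m => if m is Some w then W m - tl (zapp W n') w else 0)
  else zeroS K.

Lemma zapp_None W n : zapp W n None = 0.
Proof. by case: n. Qed.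

Definition Zlog W : series K := fun m => zapp W (deg m).+1 m.

Lemma zapp_stable W d : forall m, (deg m <= d)%N -> forall k, (deg m < k)%N ->
  zapp W k m = Zlog W m.
Proof.
elim: d => [|d IH] [w|] dm k dk; rewrite ?zapp_None /Zlog ?zapp_None //.
  by move: (wdeg_gt0 w); rewrite leqNgt (leq_ltn_trans dm) .
case: k dk => [|k] //= dk; congr (_ - _).
apply: tl_local; rewrite ?zapp_None // => m dmw.
have dmd : (deg m <= d)%N by rewrite -ltnS; apply: leq_trans dmw dm.
by rewrite (IH _ dmd) ?(IH _ dmd) //; apply: leq_trans dmw _.
Qed.

Lemma Zlog_is_log W : W None = 1 -> is_log_l W (Zlog W).
Proof.
move=> W1; split; first by rewrite /Zlog zapp_None.
case=> [w|]; last by rewrite exp_None W1.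
rewrite exp_Some; last by rewrite /Zlog zapp_None.
have -> : tl (Zlog W) w = tl (zapp W (wdeg w)) w.
  apply: tl_local => [||m dm]; first by rewrite /Zlog zapp_None.
    by rewrite zapp_None.
  by rewrite (zapp_stable W (leqnn _) dm).
by rewrite {1}/Zlog /= subrK.
Qed.

Lemma log_unique_upto (W z r : series K) d : is_log_l W z -> r None = 0 ->
  (forall m, (deg m <= d)%N -> exp_l r m = W m) ->
  forall m, (deg m <= d)%N -> z m = r m.
Proof.
move=> [z0 zl] r0 rl; elim: d rl => [|d IH] rl [w|] dm //; rewrite ?z0 ?r0 //.
  by move: (wdeg_gt0 w); rewrite leqNgt (leq_ltn_trans dm).
have e1 := zl (Some w); have e2 := rl (Some w) dm.
rewrite exp_Some // in e1; rewrite exp_Some // in e2.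
have E : tl z w = tl r w.
  apply: tl_local => // m dmw; apply: IH.
    by move=> m' dm'; apply: rl; apply: leq_trans dm' _.
  by rewrite -ltnS; apply: leq_trans dmw dm.
by apply: (addIr (tl r w)); rewrite -{1}E e1 e2.
Qed.

End Log.

Definition tabL : seq (mono * rat) := [::
  (Some Lx, q rat (1) 1);
  (Some Ly, q rat (1) 1);
  (Some (Nd Lx Ly), q rat (1) 2);
  (Some (Nd Ly Lx), q rat (-1) 2);
  (Some (Nd Lx (Nd Lx Ly)), q rat (-1) 4);
  (Some (Nd Lx (Nd Ly Lx)), q rat (1) 4);
  (Some (Nd (Nd Lx Ly) Lx), q rat (-5) 12);
  (Some (Nd (Nd Ly Lx) Lx), q rat (1) 12);
  (Some (Nd (Nd Lx Lx) Ly), q rat (1) 3);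
  (Some (Nd Ly (Nd Lx Ly)), q rat (-1) 4);
  (Some (Nd Ly (Nd Ly Lx)), q rat (1) 4);
  (Some (Nd (Nd Lx Ly) Ly), q rat (-5) 12);
  (Some (Nd (Nd Ly Lx) Ly), q rat (1) 12);
  (Some (Nd (Nd Ly Ly) Lx), q rat (-1) 6);
  (Some (Nd Lx (Nd Ly Ly)), q rat (1) 2);
  (Some (Nd (Nd Lx Lx) (Nd Lx Ly)), q rat (-1) 12);
  (Some (Nd (Nd Lx Lx) (Nd Ly Lx)), q rat (1) 12);
  (Some (Nd Lx (Nd Lx (Nd Lx Ly))), q rat (1) 8);
  (Some (Nd Lx (Nd Lx (Nd Ly Lx))), q rat (-1) 8);
  (Some (Nd (Nd Lx (Nd Lx Ly)) Lx), q rat (1) 24);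
  (Some (Nd Lx (Nd (Nd Lx Ly) Lx)), q rat (5) 24);
  (Some (Nd (Nd Lx (Nd Ly Lx)) Lx), q rat (-1) 24);
  (Some (Nd Lx (Nd (Nd Ly Lx) Lx)), q rat (-1) 24);
  (Some (Nd Lx (Nd (Nd Lx Lx) Ly)), q rat (-1) 6);
  (Some (Nd (Nd (Nd Lx Lx) Ly) Lx), q rat (-5) 24);
  (Some (Nd (Nd (Nd Lx Ly) Lx) Lx), q rat (1) 12);
  (Some (Nd (Nd (Nd Lx Lx) Lx) Ly), q rat (1) 8);
  (Some (Nd (Nd (Nd Lx Ly) Lx) Ly), q rat (1) 12);
  (Some (Nd Ly (Nd (Nd Lx Ly) Lx)), q rat (5) 24);
  (Some (Nd Ly (Nd (Nd Ly Lx) Lx)), q rat (-1) 24);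
  (Some (Nd Lx (Nd (Nd Ly Lx) Ly)), q rat (-1) 24);
  (Some (Nd Lx (Nd (Nd Ly Ly) Lx)), q rat (1) 12);
  (Some (Nd (Nd Ly (Nd Lx Ly)) Lx), q rat (1) 24);
  (Some (Nd (Nd Ly (Nd Ly Lx)) Lx), q rat (-1) 24);
  (Some (Nd (Nd (Nd Ly Ly) Lx) Lx), q rat (1) 24);
  (Some (Nd Lx (Nd Lx (Nd Ly Ly))), q rat (-1) 4);
  (Some (Nd Lx (Nd (Nd Lx Ly) Ly)), q rat (5) 24);
  (Some (Nd (Nd (Nd Lx Lx) Ly) Ly), q rat (-5) 24);
  (Some (Nd (Nd Lx Lx) (Nd Ly Ly)), q rat (1) 4);
  (Some (Nd (Nd Lx (Nd Ly Ly)) Lx), q rat (-1) 4);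
  (Some (Nd (Nd (Nd Lx Ly) Ly) Lx), q rat (1) 12);
  (Some (Nd Ly (Nd (Nd Lx Lx) Ly)), q rat (-1) 6);
  (Some (Nd (Nd Lx (Nd Lx Ly)) Ly), q rat (1) 24);
  (Some (Nd (Nd Lx (Nd Ly Lx)) Ly), q rat (-1) 24);
  (Some (Nd (Nd Lx Ly) (Nd Lx Ly)), q rat (-5) 24);
  (Some (Nd (Nd Lx Ly) (Nd Ly Lx)), q rat (5) 24);
  (Some (Nd Lx (Nd Ly (Nd Lx Ly))), q rat (1) 8);
  (Some (Nd Ly (Nd Lx (Nd Lx Ly))), q rat (1) 8);
  (Some (Nd Lx (Nd Ly (Nd Ly Lx))), q rat (-1) 8);
  (Some (Nd Ly (Nd Lx (Nd Ly Lx))), q rat (-1) 8);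
  (Some (Nd (Nd Ly Lx) (Nd Lx Ly)), q rat (1) 24);
  (Some (Nd (Nd Ly Lx) (Nd Ly Lx)), q rat (-1) 24);
  (Some (Nd (Nd Lx (Nd Ly Ly)) Ly), q rat (-1) 4);
  (Some (Nd (Nd (Nd Lx Ly) Ly) Ly), q rat (1) 12);
  (Some (Nd Ly (Nd Lx (Nd Ly Ly))), q rat (-1) 4);
  (Some (Nd Ly (Nd (Nd Lx Ly) Ly)), q rat (5) 24);
  (Some (Nd (Nd Ly Ly) (Nd Lx Ly)), q rat (-1) 12);
  (Some (Nd (Nd Ly Ly) (Nd Ly Lx)), q rat (1) 12);
  (Some (Nd Ly (Nd Ly (Nd Lx Ly))), q rat (1) 8);
  (Some (Nd Ly (Nd Ly (Nd Ly Lx))), q rat (-1) 8);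
  (Some (Nd (Nd Ly (Nd Lx Ly)) Ly), q rat (1) 24);
  (Some (Nd (Nd Ly (Nd Ly Lx)) Ly), q rat (-1) 24);
  (Some (Nd Ly (Nd (Nd Ly Lx) Ly)), q rat (-1) 24);
  (Some (Nd (Nd (Nd Ly Ly) Lx) Ly), q rat (1) 24);
  (Some (Nd Ly (Nd (Nd Ly Ly) Lx)), q rat (1) 12);
  (Some (Nd (Nd (Nd Ly Ly) Ly) Lx), q rat (-1) 24);
  (Some (Nd Lx (Nd (Nd Ly Ly) Ly)), q rat (1) 6)].
Fixpoint look (l : seq (mono * rat)) (m : mono) : rat :=
  if l is p :: l' then (if p.1 == m then p.2 else look l' m) else 0.
Definition tabS : series rat := look tabL.

Lemma checkA : all (fun m => crhs rat m == tabS m) (monos_le 4).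
Proof.
unfold crhs, cbrk, cpS2, spD, cldiv, ldivw, Delta, delta_mono, deltaw, lnprod, assocS,
  commS, mulS, mulT, addT, tens, addS, oppS, scaleS, monoS.
rewrite ?bigop.unlock.
vm_compute; reflexivity.
Qed.

Lemma checkB : all (fun m => cexp tabS m == mulS (cexp (xS rat)) (cexp (yS rat)) m) (monos_le 4).
Proof.
unfold cexp, powS, mulS; rewrite ?bigop.unlock.
vm_compute; reflexivity.
Qed.

Lemma rhs2_tab m : (deg m <= 4)%N -> rhs2 rat m = tabS m.
Proof.
move=> dm; rewrite rhs2_crhs; apply/eqP.
exact: (allP checkA m (monos_le_complete dm)).
Qed.

Lemma tabS_None : tabS None = 0.
Proof. by vm_compute. Qed.

Theorem mainTheorem7 (K : fieldType) (charK0 : [pchar K] =i pred0) :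
  (exists z : series K, is_log_l (mulS (exp_l (xS K)) (exp_l (yS K))) z) /\
  (forall z : series K, is_log_l (mulS (exp_l (xS K)) (exp_l (yS K))) z ->
     forall m : mono, (deg m <= 4)%N -> z m = rhs K m).
Proof.
have W1 : mulS (exp_l (xS K)) (exp_l (yS K)) None = 1.
  by rewrite /mulS big_seq1 !exp_None mulr1.
split; first by eexists; apply: Zlog_is_log.
move=> z hz m dm.
have r0 : rhs K None = 0.
  by rewrite (rhs_rhs2 charK0) -(@map_rhs2 K charK0) /mapS rhs2_tab // tabS_None (@ratr0 K).
apply: (log_unique_upto hz r0 _ dm) => m' dm'.
rewrite (rhs_rhs2 charK0) -(@map_rhs2 K charK0) -(@map_exp K charK0).
rewrite -(@map_xS K) -(@map_yS K) -!(@map_exp K charK0) -(@map_mulS K charK0) /mapS.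
congr ratr.
rewrite (@exp_local _ _ tabS); last first.
  by move=> m'' d''; apply: rhs2_tab; apply: leq_trans d'' dm'.
have := allP checkB m' (monos_le_complete dm'); rewrite -!exp_c => /eqP.
by [].
Qed.
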